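(* For every $\alpha\in(0,\tfrac12)$ there is an online algorithm for non-clairvoyant dynamic bin packing whose total migrated size is at most a $\frac{\alpha}{1-2\alpha}$-fraction of the total size of the items, and which at every time $t$ has at most $\frac{1}{\alpha}\mathrm{OPT}_t+1$ open bins.
   Context: Dynamic bin packing: bins have capacity $1$; items arrive online at times $a_i\ge0$ with size $s_i\in[0,1]$ and duration $d_i>0$ (only the size is revealed at arrival), present during $[a_i,a_i+d_i)$. Each item is placed on arrival into an open bin with enough remaining capacity or a new bin; a migration moves an already placed item to another bin. In the size-cost model, each migration of item $i$ costs $s_i$; the total migrated size is the sum of these costs, and the total size of the items is $\sum_i s_i$. A bin is open while nonempty. $\mathrm{OPT}_t$ is the minimum number of unit bins needed to pack the items present at time $t$. *)

(* Defs.v *)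
From HB Require Import structures.
From mathcomp Require Import all_boot all_order all_algebra.
From mathcomp Require Import Rstruct.
From Stdlib Require Rdefinitions.
Notation R := Rdefinitions.R.

Set Implicit Arguments.
Unset Strict Implicit.
Unset Printing Implicit Defensive.

Import Order.TTheory GRing.Theory Num.Theory.
Local Open Scope ring_scope.

(** An item: arrival time a, size s, duration d (present during [a, a+d)). *)
Record item := Item { arr : R; sz : R; dur : R }.

(** Well-formed instance: finite list of items, a_i >= 0, s_i in [0,1],
    d_i > 0, listed in nondecreasing order of arrival time (so that the list
    index of an item is its arrival rank; ties are broken by list index). *)
Definition dflt_item := Item 0 0 1.
Definition it_ (I : seq item) (i : nat) : item := nth dflt_item I i.

Definition valid_instance (I : seq item) : Prop :=
  (forall i, (i < size I)%N ->
     0 <= arr (it_ I i) /\ 0 <= sz (it_ I i) <= 1 /\ 0 < dur (it_ I i))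
  /\ sorted (fun x y => arr x <= arr y) I.


Definition present_at (I : seq item) (t : R) (i : nat) : bool :=
  (arr (it_ I i) <= t) && (t < arr (it_ I i) + dur (it_ I i)).

(** Raw events: (time, kind, item index); kind 0 = departure, 1 = arrival.
    Events are processed in lexicographic order: by time, then departures
    before arrivals (intervals are half-open), then by item index. *)
Definition rawev := (R * nat * nat)%type.

Definition ev_time (e : rawev) : R := e.1.1.

Definition ev_le (e1 e2 : rawev) : bool :=
  (e1.1.1 < e2.1.1) ||
  ((e1.1.1 == e2.1.1) &&
   ((e1.1.2 < e2.1.2)%N || ((e1.1.2 == e2.1.2) && (e1.2 <= e2.2)%N))).

Definition arr_ev (I : seq item) (i : nat) : rawev := (arr (it_ I i), 1%N, i).
Definition dep_ev (I : seq item) (i : nat) : rawev :=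
  (arr (it_ I i) + dur (it_ I i), 0%N, i).

Definition events (I : seq item) : seq rawev :=
  sort ev_le ([seq dep_ev I i | i <- iota 0 (size I)] ++
              [seq arr_ev I i | i <- iota 0 (size I)]).

(** What an online non-clairvoyant algorithm observes: at an arrival, the
    current time and the size of the new item (items are identified by their
    arrival rank); at a departure, the current time and which item left.
    Durations are never revealed. *)
Inductive event :=
| Arrive of R & R      (* time, size *)
| Depart of R & nat.   (* time, arrival rank of the departing item *)

Definition observe (I : seq item) (e : rawev) : event :=
  if e.1.2 == 0%N then Depart e.1.1 e.2 else Arrive e.1.1 (sz (it_ I e.2)).

(** An online algorithm: after each event, given the whole observed history,
    it outputs the bin (a natural-number label) of every item (indexed by
    arrival rank); only the values on present items matter.  Placement of a
    newly arrived item and all migrations are read off from consecutive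
    outputs. *)
Definition online_alg := seq event -> nat -> nat.

Definition config (A : online_alg) (I : seq item) (k : nat) : nat -> nat :=
  A (map (observe I) (take k (events I))).

Definition present_after (I : seq item) (k i : nat) : bool :=
  (arr_ev I i \in take k (events I)) && (dep_ev I i \notin take k (events I)).

Definition feasible (A : online_alg) (I : seq item) : Prop :=
  forall k, (k <= size (events I))%N -> forall b : nat,
    \sum_(0 <= i < size I | present_after I k i && (config A I k i == b))
       sz (it_ I i) <= 1.

Definition migrated_size (A : online_alg) (I : seq item) : R :=
  \sum_(0 <= k < size (events I))
    \sum_(0 <= i < size I | [&& present_after I k i, present_after I k.+1 i
                              & config A I k i != config A I k.+1 i])
       sz (it_ I i).

Definition total_size (I : seq item) : R :=
  \sum_(0 <= i < size I) sz (it_ I i).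

Definition config_at (A : online_alg) (I : seq item) (t : R) : nat -> nat :=
  config A I (count (fun e => ev_time e <= t) (events I)) .

Definition open_bins (A : online_alg) (I : seq item) (t : R) : nat :=
  size (undup [seq config_at A I t i | i <- iota 0 (size I) & present_at I t i]).

Definition packable (I : seq item) (P : nat -> bool) (m : nat) : Prop :=
  exists f : nat -> nat,
    (forall i, (i < size I)%N -> P i -> (f i < m)%N) /\
    forall b : nat,
      \sum_(0 <= i < size I | P i && (f i == b)) sz (it_ I i) <= 1.

Definition OPT_le (I : seq item) (t : R) (m : nat) : Prop :=
  packable I (present_at I t) m.

(* Main.v *)
Require Import Defs.
From HB Require Import structures.
From mathcomp Require Import all_boot all_order all_algebra.
From mathcomp Require Import Rstruct.
From mathcomp Require Import lra zify.
Import Order.TTheory GRing.Theory Num.Theory.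
Set Implicit Arguments.
Unset Strict Implicit.
Unset Printing Implicit Defensive.
Local Open Scope ring_scope.

Lemma ev_le_trans : transitive ev_le.
Proof.
move=> [[y ky] iy] [[x kx] ix] [[z kz] iz]; rewrite /ev_le /=.
case/orP=> [h1|/andP[/eqP e1 h1]]; case/orP=> [h2|/andP[/eqP e2 h2]].
- by rewrite (lt_trans h1 h2).
- by subst; rewrite h1.
- by subst; rewrite h2.
- subst; rewrite eqxx /= lt_irreflexive /=.
  move: h1 h2; lia.
Qed.

Lemma ev_le_total : total ev_le.
Proof.
move=> [[x kx] ix] [[y ky] iy]; rewrite /ev_le /=.
case: (ltgtP x y) => //= _; lia.
Qed.

Lemma ev_le_time e1 e2 : ev_le e1 e2 -> ev_time e1 <= ev_time e2.
Proof.
rewrite /ev_le /ev_time; case/orP=> [/ltW //|/andP[/eqP -> _]] //.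
Qed.

Lemma filter_take (T : Type) (p : pred T) (s : seq T) k :
  filter p (take k s) = take (count p (take k s)) (filter p s).
Proof.
elim: s k => [|x s IH] [|k] //=; case: (p x) => /=; rewrite ?add0n ?IH ?take0 //.
Qed.

Lemma take_count_sorted (T : eqType) (r : rel T) (P : pred T) (s : seq T) :
  transitive r -> (forall x y, r x y -> P y -> P x) -> sorted r s ->
  take (count P s) s = filter P s.
Proof.
move=> tr hP; elim: s => //= x s IH hs.
have hs' := path_sorted hs.
case Px: (P x) => /=; first by rewrite IH.
have hall := order_path_min tr hs.
have h0 : {in s, P =1 pred0}.
  move=> y ys /=; apply/negbTE/negP => Py.
  by move/allP: hall => /(_ y ys) /hP /(_ Py); rewrite Px.
by rewrite (eq_in_count h0) count_pred0 (eq_in_filter h0) filter_pred0.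
Qed.

Lemma nth_notin_take (T : eqType) (x0 : T) (s : seq T) k :
  uniq s -> (k < size s)%N -> nth x0 s k \notin take k s.
Proof.
move=> us hk; rewrite in_take ?mem_nth // index_uniq //; lia.
Qed.
Section Ev.
Variable I : seq item.
Hypothesis vI : valid_instance I.
Local Notation n := (size I).
Local Notation ev := (events I).

Definition deps := [seq dep_ev I i | i <- iota 0 n].
Definition arrs := [seq arr_ev I i | i <- iota 0 n].
Definition isArr (e : rawev) : bool := (e.1.2 == 1%N).

Lemma mem_ev e : (e \in ev) = (e \in deps ++ arrs).
Proof. by rewrite /events mem_sort. Qed.

Lemma arr_in i : (i < n)%N -> arr_ev I i \in ev.
Proof. by move=> h; rewrite mem_ev mem_cat; apply/orP; right; apply/mapP; exists i => //; rewrite mem_iota. Qed.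

Lemma dep_in i : (i < n)%N -> dep_ev I i \in ev.
Proof. by move=> h; rewrite mem_ev mem_cat; apply/orP; left; apply/mapP; exists i => //; rewrite mem_iota. Qed.

Lemma ev_cases e : e \in ev ->
  (exists2 i, (i < n)%N & e = dep_ev I i) \/ (exists2 i, (i < n)%N & e = arr_ev I i).
Proof.
rewrite mem_ev mem_cat; case/orP=> /mapP[i]; rewrite mem_iota add0n => /andP[_ h] ->.
  by left; exists i.
by right; exists i.
Qed.

Lemma arr_idx i : arr_ev I i \in ev -> (i < n)%N.
Proof. by case/ev_cases=> [][j h] [] *; subst. Qed.

Lemma dep_idx i : dep_ev I i \in ev -> (i < n)%N.
Proof. by case/ev_cases=> [][j h] [] *; subst. Qed.

Lemma arr_ev_inj : injective (arr_ev I).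
Proof. by move=> i j [] _ ->. Qed.
Lemma dep_ev_inj : injective (dep_ev I).
Proof. by move=> i j [] _ ->. Qed.

Lemma uniq_ev : uniq ev.
Proof.
rewrite /events sort_uniq cat_uniq !map_inj_uniq ?iota_uniq //=;
  [|exact: arr_ev_inj|exact: dep_ev_inj].
rewrite andbT; apply/hasPn => e /mapP[i _ ->]; apply/negP => /mapP[j _] [].
done.
Qed.

Lemma sorted_ev : sorted ev_le ev.
Proof. exact: sort_sorted ev_le_total _. Qed.

Lemma sorted_arrs : sorted ev_le arrs.
Proof.
case: vI => _ hs.
apply/(sortedP (arr_ev I 0)) => k; rewrite size_map size_iota => hk.
rewrite /arrs !(nth_map 0%N) ?size_iota; try lia.
rewrite !nth_iota; try lia.
rewrite /ev_le /= !add0n.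
have := sorted_ltn_nth (fun b a c (h1 : arr a <= arr b) (h2 : arr b <= arr c) => le_trans h1 h2) dflt_item hs.
move=> /(_ k k.+1); rewrite !inE => /(_ _ _ (ltnSn k)).
rewrite /it_; move=> h; have {}h := h (ltac:(lia)) (ltac:(lia)).
rewrite le_eqVlt in h; case/orP: h => [/eqP ->|->] //.
rewrite eqxx /=; lia.
Qed.

Lemma filter_arr_ev : filter isArr ev = arrs.
Proof.
rewrite /events filter_sort; [|exact: ev_le_total|exact: ev_le_trans].
rewrite filter_cat.
have -> : filter isArr deps = [::].
  by rewrite (@eq_in_filter _ _ pred0) ?filter_pred0 // => e /mapP[i _ ->].
rewrite (@eq_in_filter _ _ predT) ?filter_predT; last by move=> e /mapP[i _ ->].
by rewrite /= sorted_sort //; [exact: ev_le_trans| exact: sorted_arrs].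
Qed.

Lemma arr_take i k : (i < n)%N ->
  (arr_ev I i \in take k ev) = (i < count isArr (take k ev))%N.
Proof.
move=> hi.
have -> : (arr_ev I i \in take k ev) = (arr_ev I i \in filter isArr (take k ev)).
  by rewrite mem_filter.
rewrite filter_take filter_arr_ev /arrs -map_take take_iota (mem_map arr_ev_inj) mem_iota.
lia.
Qed.

Lemma count_arr_le k : (count isArr (take k ev) <= n)%N.
Proof.
have -> : n = size (filter isArr ev) by rewrite filter_arr_ev size_map size_iota.
by rewrite size_filter -{2}(cat_take_drop k ev) count_cat leq_addr.
Qed.

Lemma dep_before_arr i k : dep_ev I i \in take k ev -> arr_ev I i \in take k ev.
Proof.
move=> hd; have hdi : dep_ev I i \in ev by apply: mem_take hd.
have hn := @dep_idx i hdi.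
have hai := @arr_in i hn.
move: hd; rewrite !in_take //.
case: (ltngtP (index (arr_ev I i) ev) (index (dep_ev I i) ev)) => h; try lia.
- move=> hk; exfalso.
  have := sorted_ltn_nth ev_le_trans (arr_ev I i) sorted_ev .
  move=> /(_ (index (dep_ev I i) ev) (index (arr_ev I i) ev)).
  rewrite !inE !index_mem => /(_ hdi hai h).
  rewrite !nth_index // => /ev_le_time; rewrite /ev_time /=.
  case: vI => /(_ i hn) [_ [_ hd]] _; lra.
Qed.

Lemma time_prefix t :
  take (count (fun e => ev_time e <= t) ev) ev = filter (fun e => ev_time e <= t) ev.
Proof.
apply: take_count_sorted; [exact: ev_le_trans| |exact: sorted_ev].
by move=> x y /ev_le_time h1 h2; apply: le_trans h1 h2.
Qed.

End Ev.
Section Alg.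
Variable alpha : R.

Record st := St { asg : nat -> nat; na : nat; dp : nat -> bool; szs : nat -> R;
                  mat : nat -> bool; nxt : nat; fb : nat; dpb : nat -> R }.

Definition upd {T} (f : nat -> T) (i : nat) (v : T) : nat -> T :=
  fun j => if j == i then v else f j.

Definition pr (s : st) i := (i < na s)%N && ~~ dp s i.
Definition load (s : st) b := \sum_(0 <= i < na s | pr s i && (asg s i == b)) szs s i.
Definition nonempty (s : st) b := has (fun i => pr s i && (asg s i == b)) (index_iota 0 (na s)).

Definition addi (s : st) b x :=
  St (upd (asg s) (na s) b) (na s).+1 (dp s) (upd (szs s) (na s) x) (mat s) (nxt s) (fb s) (dpb s).
Definition setmnf (s : st) m nx f :=
  St (asg s) (na s) (dp s) (szs s) m nx f (dpb s).
Definition del (s : st) j :=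
  St (asg s) (na s) (upd (dp s) j true) (szs s) (mat s) (nxt s) (fb s)
     (upd (dpb s) (asg s j) (dpb s (asg s j) + szs s j)).
Definition merge (s : st) Y Z :=
  St (fun i => if asg s i == Y then Z else asg s i) (na s) (dp s) (szs s)
     (upd (mat s) Y false) (nxt s) (fb s) (upd (dpb s) Y 0).

Lemma nonemptyP s b : reflect (exists i, pr s i /\ asg s i = b) (nonempty s b).
Proof.
apply: (iffP hasP) => [[i _ /andP[h /eqP e]]|[i [h e]]]; first by exists i.
exists i; last by rewrite h e eqxx.
by rewrite mem_index_iota; case/andP: h.
Qed.

Lemma load_ge0 s b : (forall i, pr s i -> 0 <= szs s i) -> 0 <= load s b.
Proof.
move=> h; rewrite /load big_seq_cond; apply: sumr_ge0 => i /andP[_ /andP[hi _]]; exact: h.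
Qed.

Lemma load_empty s b : ~~ nonempty s b -> load s b = 0.
Proof.
move=> h; rewrite /load big_seq_cond big1 // => i /andP[hin hi].
by move/hasPn: h => /(_ i hin); rewrite hi.
Qed.

Lemma load_item s b i : (forall i, pr s i -> 0 <= szs s i) -> pr s i -> asg s i = b ->
  szs s i <= load s b.
Proof.
move=> h0 hp ha; rewrite /load big_mkcond (bigD1_seq i) /=; last first.
- exact: iota_uniq.
- by rewrite mem_index_iota; case/andP: hp.
rewrite hp ha eqxx /= lerDl; apply: sumr_ge0 => k _; case: ifP => // /andP[hk _].
exact: h0.
Qed.

Lemma load_big s b : (forall i, pr s i -> 0 <= szs s i) -> nonempty s b ->
  (forall i, pr s i -> asg s i = b -> alpha < szs s i) -> alpha < load s b.
Proof.
move=> h0 /nonemptyP[i [hp ha]] hb.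
by apply: (lt_le_trans (hb i hp ha)); apply: load_item.
Qed.

Lemma sum_split1 (r : seq nat) (P : pred nat) (F : nat -> R) j :
  uniq r -> j \in r ->
  \sum_(i <- r | P i) F i = (if P j then F j else 0) + \sum_(i <- r | P i && (i != j)) F i.
Proof.
move=> ur jr; rewrite big_mkcond (bigD1_seq j) //=; congr (_ + _).
rewrite [RHS]big_mkcond [LHS]big_mkcond /=; apply: eq_bigr => i _.
by case: (P i); case: (i != j).
Qed.

Section Steps.
Variable s : st.

Lemma pr_addi b x j : ~~ dp s (na s) -> pr (addi s b x) j = pr s j || (j == na s).
Proof.
move=> hdp; rewrite /pr /= ltnS leq_eqVlt orbC.
case: (eqVneq j (na s)) => [->|hne] /=; first by rewrite ltnn hdp.
by rewrite !orbF.
Qed.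

Lemma load_addi b x c : ~~ dp s (na s) ->
  load (addi s b x) c = load s c + (if c == b then x else 0).
Proof.
move=> hdp; rewrite /load /= !big_mkcond big_nat_recr //=; congr (_ + _).
- rewrite [RHS]big_mkcond; apply: eq_big_nat => i /andP[_ hi].
  have hne : (i == na s) = false by rewrite ltn_eqF.
  by rewrite /pr /= /upd hne ltnS (ltnW hi) hi.
- by rewrite /pr /= /upd eqxx ltnS leqnn hdp /= eq_sym; case: (c == b).
Qed.

Lemma nonempty_addi b x c : ~~ dp s (na s) ->
  nonempty (addi s b x) c = nonempty s c || (c == b).
Proof.
move=> hdp; apply/nonemptyP/orP => [[i [hp ha]]|[/nonemptyP[i [hp ha]]|/eqP ->]].
- move: hp; rewrite pr_addi // => /orP[hp|/eqP ei].
  + left; apply/nonemptyP; exists i; split => //.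
    move: ha; rewrite /= /upd; case: eqP => // ei; move: hp; rewrite /pr ei ltnn.
    done.
  + by right; move: ha; rewrite /= /upd ei eqxx => ->.
- exists i; split; first by rewrite pr_addi // hp.
  rewrite /= /upd; case: eqP => // ei; move: hp; rewrite /pr ei ltnn; done.
- exists (na s); split; first by rewrite pr_addi // eqxx orbT.
  by rewrite /= /upd eqxx.
Qed.

Lemma asg_addi b x i : pr s i -> asg (addi s b x) i = asg s i.
Proof. by rewrite /= /upd; case: eqP => // ->; rewrite /pr ltnn. Qed.
Lemma szs_addi b x i : pr s i -> szs (addi s b x) i = szs s i.
Proof. by rewrite /= /upd; case: eqP => // ->; rewrite /pr ltnn. Qed.

Variable j : nat.
Hypothesis hj : pr s j.

Lemma pr_del i : pr (del s j) i = pr s i && (i != j).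
Proof. by rewrite /pr /= /upd; case: eqP => [->|]; rewrite ?andbF ?andbT. Qed.

Lemma load_del c : load (del s j) c = load s c - (if c == asg s j then szs s j else 0).
Proof.
rewrite /load /= [in RHS](@sum_split1 _ _ _ j) ?iota_uniq //; last first.
  by rewrite mem_index_iota; case/andP: hj.
rewrite hj /= eq_sym.
have -> : \sum_(0 <= i < na s | pr (del s j) i && (asg s i == c)) szs s i =
          \sum_(0 <= i < na s | pr s i && (asg s i == c) && (i != j)) szs s i.
  by apply: eq_bigl => i; rewrite pr_del; case: (pr s i); case: (i != j); case: (asg s i == c).
by case: (c == asg s j) => /=; lra.
Qed.

Lemma nonempty_del c : nonempty (del s j) c -> nonempty s c.
Proof.
by case/nonemptyP=> i [hp ha]; apply/nonemptyP; exists i; move: hp; rewrite pr_del => /andP[].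
Qed.

Lemma nonempty_del_ne c : c != asg s j -> nonempty (del s j) c = nonempty s c.
Proof.
move=> hc; apply/idP/idP; first exact: nonempty_del.
case/nonemptyP=> i [hp ha]; apply/nonemptyP; exists i; split => //.
rewrite pr_del hp /=; apply/eqP => ei; move: hc; rewrite -ha ei eqxx.
done.
Qed.
End Steps.

Section Merge.
Variables (s : st) (Y Z : nat).
Hypothesis hYZ : Y != Z.

Lemma load_merge c : load (merge s Y Z) c =
  if c == Y then 0 else if c == Z then load s Z + load s Y else load s c.
Proof.
rewrite /load /=; case: (eqVneq c Y) => [->|hcY].
  rewrite big_mkcond big1 // => i _; case: (eqVneq (asg s i) Y) => [_|hn].
    by rewrite eq_sym (negbTE hYZ) andbF.
  by rewrite (negbTE hn) andbF.
case: (eqVneq c Z) => [->|hcZ].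
  rewrite big_mkcond [X in _ = X + _]big_mkcond [X in _ = _ + X]big_mkcond -big_split /=; apply: eq_bigr => i _.
  case: (eqVneq (asg s i) Y) => [->|hn]; first by rewrite /pr /= eqxx (negbTE hYZ) andbF andbT add0r.
  by rewrite /pr /= ?andbF ?addr0.
apply: eq_bigl => i; case: (eqVneq (asg s i) Y) => [->|hn] //.
by rewrite /pr /= !(eq_sym _ c) (negbTE hcZ) (negbTE hcY) !andbF.
Qed.

Lemma nonempty_merge c : nonempty (merge s Y Z) c =
  if c == Y then false else if c == Z then nonempty s Z || nonempty s Y else nonempty s c.
Proof.
case: (eqVneq c Y) => [->|hcY].
  apply/negbTE/negP => /nonemptyP[i [_]] /=; case: eqP => // _ e.
  by move: hYZ; rewrite e eqxx.
case: (eqVneq c Z) => [->|hcZ].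
  apply/nonemptyP/orP => [[i [hp /=]]|[|]/nonemptyP[i [hp ha]]].
  - case: (eqVneq (asg s i) Y) => [ha _|hn ha].
      by right; apply/nonemptyP; exists i.
    by left; apply/nonemptyP; exists i.
  - by exists i; split => //=; rewrite ha; case: eqP.
  - by exists i; split => //=; rewrite ha eqxx.
apply/nonemptyP/nonemptyP => [[i [hp /=]]|[i [hp ha]]].
  case: (eqVneq (asg s i) Y) => [_ e|_ e]; last by exists i.
  by move: hcZ; rewrite e eqxx.
exists i; split => //=; rewrite ha (negbTE hcY) //.
Qed.
End Merge.

Definition light (s : st) b := nonempty s b && (load s b < alpha).
Definition findl (s : st) (q : pred nat) :=
  ohead [seq b <- iota 0 (nxt s) | light s b && q b].

Lemma findl_some s q b : findl s q = Some b -> [/\ light s b, q b & (b < nxt s)%N].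
Proof.
rewrite /findl; case E: [seq b <- iota 0 (nxt s) | light s b && q b] => [|y l] //= [<-].
have : y \in [seq b <- iota 0 (nxt s) | light s b && q b] by rewrite E mem_head.
by rewrite mem_filter mem_iota add0n => /andP[/andP[h1 h2] /andP[_ h3]].
Qed.

Lemma findl_none s q b : findl s q = None -> (b < nxt s)%N -> ~~ (light s b && q b).
Proof.
rewrite /findl; case E: [seq b <- iota 0 (nxt s) | light s b && q b] => [|y l] //= _ hb.
apply/negP => h.
have : b \in [seq b <- iota 0 (nxt s) | light s b && q b] by rewrite mem_filter h mem_iota.
by rewrite E.
Qed.

Definition arrive (s : st) (x : R) : st :=
  if alpha < x then setmnf (addi s (nxt s) x) (mat s) (nxt s).+1 (fb s)
  else match findl s predT with
   | Some L => addi s L x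
   | None => if nonempty s (fb s) && (load s (fb s) + x <= 1) then addi s (fb s) x
             else setmnf (addi s (nxt s) x)
                    (if nonempty s (fb s) then upd (mat s) (fb s) true else mat s)
                    (nxt s).+1 (nxt s)
  end.

Definition depart (s : st) (j : nat) : st :=
  let s1 := del s j in
  let B := asg s j in
  if light s1 B then
    match findl s1 (fun b => b != B) with
    | Some X => if mat s1 B then merge s1 B X else merge s1 X B
    | None => s1
    end
  else s1.

Record INV (s : st) : Prop := Inv {
 i_sz : forall i, pr s i -> 0 <= szs s i <= 1;
 i_asg : forall i, pr s i -> (asg s i < nxt s)%N;
 i_fresh : forall b, (nxt s <= b)%N -> mat s b = false /\ dpb s b = 0;
 i_dpb : forall b, 0 <= dpb s b;
 i_load : forall b, load s b <= 1;
 i_light : forall b1 b2, light s b1 -> light s b2 -> b1 = b2;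
 i_big : forall b, nonempty s b -> ~~ mat s b -> b != fb s ->
           forall i, pr s i -> asg s i = b -> alpha < szs s i;
 i_mat : forall b, mat s b -> 1 - alpha <= dpb s b + load s b;
 i_dp : forall i, dp s i -> (i < na s)%N }.

Hypothesis ha0 : 0 < alpha.
Hypothesis ha1 : alpha + alpha < 1.
Local Ltac alra := have ? := ha0; have ? := ha1; lra.

Lemma nonempty_lt s b : INV s -> nonempty s b -> (b < nxt s)%N.
Proof. by move=> iv /nonemptyP[i [hp <-]]; exact: (i_asg iv hp). Qed.

Lemma light_lt s b : INV s -> light s b -> (b < nxt s)%N.
Proof. by move=> iv /andP[h _]; apply: nonempty_lt h. Qed.

Lemma szs0 s : INV s -> forall i, pr s i -> 0 <= szs s i.
Proof. by move=> iv i /(i_sz iv) /andP[]. Qed.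

Lemma light_fb s b : INV s -> light s b -> ~~ mat s b -> b = fb s.
Proof.
move=> iv /andP[hne hl] hm; apply/eqP/negPn/negP => hb.
have := load_big (szs0 iv) hne (i_big iv hne hm hb).
by rewrite ltNge (ltW hl).
Qed.

Lemma light_addi s b (x : R) c : ~~ dp s (na s) ->
  light (addi s b x) c = if c == b then load s b + x < alpha else light s c.
Proof.
move=> hdp; rewrite /light nonempty_addi // load_addi //.
case: (eqVneq c b) => [->|hcb] /=; first by rewrite orbT.
by rewrite orbF addr0.
Qed.

Lemma inv_place s (x : R) b m nx f :
  INV s -> 0 <= x <= 1 ->
  (b < nx)%N -> (nxt s <= nx)%N ->
  (forall c, (nx <= c)%N -> m c = false) ->
  load s b + x <= 1 ->
  (forall c, m c -> 1 - alpha <= dpb s c + load s c + (if c == b then x else 0)) ->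
  (forall c1 c2, light (addi s b x) c1 -> light (addi s b x) c2 -> c1 = c2) ->
  (forall c, nonempty s c -> ~~ m c -> c != f -> ~~ mat s c && (c != fb s)) ->
  (~~ m b -> b != f -> alpha < x) ->
  INV (setmnf (addi s b x) m nx f).
Proof.
move=> iv hx hb hnx hm hlb hmat hli hbig hnew.
have hdp : ~~ dp s (na s) by apply/negP => /(i_dp iv); rewrite ltnn.
have prE i : pr (setmnf (addi s b x) m nx f) i = pr s i || (i == na s) by apply: pr_addi.
have loadE c : load (setmnf (addi s b x) m nx f) c = load s c + (if c == b then x else 0)
  by apply: load_addi.
have neE c : nonempty (setmnf (addi s b x) m nx f) c = nonempty s c || (c == b)
  by apply: nonempty_addi.
have nana : forall i, pr s i -> (i == na s) = false.
  by move=> i /andP[hi _]; rewrite ltn_eqF.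
split.
- move=> i; rewrite prE => /orP[hp|/eqP ->].
    by rewrite /= /upd nana //; apply: (i_sz iv).
  by rewrite /= /upd eqxx.
- move=> i; rewrite prE => /orP[hp|/eqP ->].
    by rewrite /= /upd nana //; apply: leq_trans hnx; apply: (i_asg iv).
  by rewrite /= /upd eqxx.
- move=> c hc; split; first exact: hm.
  by case: (i_fresh iv (leq_trans hnx hc)).
- exact: (i_dpb iv).
- move=> c; rewrite loadE; case: (eqVneq c b) => [->//|_]; rewrite addr0; exact: (i_load iv).
- exact: hli.
- move=> c hne hmc hcf i; rewrite prE => /orP[hp|/eqP ->].
    rewrite /= /upd nana // => hac.
    have hnes : nonempty s c by apply/nonemptyP; exists i.
    case/andP: (hbig c hnes hmc hcf) => h1 h2.
    exact: (i_big iv hnes h1 h2 hp hac).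
  rewrite /= /upd !eqxx => hbc; rewrite -hbc in hmc hcf; exact: hnew.
- move=> c hc; rewrite loadE addrA; exact: hmat.
- by move=> i /(i_dp iv) hi /=; apply: ltnW.
Qed.

Lemma inv_arrive s (x : R) : INV s -> 0 <= x <= 1 -> INV (arrive s x).
Proof.
move=> iv hx; case/andP: (hx) => hx0 hx1.
have hdp : ~~ dp s (na s) by apply/negP => /(i_dp iv); rewrite ltnn.
have nonfresh c : (nxt s <= c)%N -> nonempty s c = false.
  by move=> hc; apply/negbTE/negP => /(nonempty_lt iv); rewrite ltnNge hc.
have load_nxt : load s (nxt s) = 0 by rewrite load_empty // nonfresh.
have matlt c : mat s c -> (c < nxt s)%N.
  by move=> hc; rewrite ltnNge; apply/negP => /(i_fresh iv) [h _]; rewrite h in hc.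
rewrite /arrive; case: ifP => hax.
-
  apply: inv_place => //.
  + by move=> c hc; case: (i_fresh iv (ltnW hc)).
  + by rewrite load_nxt add0r; case/andP: hx.
  + move=> c hc; case: (eqVneq c (nxt s)) => [e|_]; first by move: (matlt _ hc); rewrite e ltnn.
    rewrite addr0; exact: (i_mat iv).
  + move=> c1 c2; rewrite !light_addi //.
    case: (eqVneq c1 (nxt s)) => [_|_]; first by rewrite load_nxt add0r ltNge (ltW hax).
    case: (eqVneq c2 (nxt s)) => [_|_]; first by rewrite load_nxt add0r ltNge (ltW hax).
    exact: (i_light iv).
  + by move=> c _ -> ->.
- have hxa : x <= alpha by rewrite leNgt hax.
  case E: (findl s predT) => [L|].
  + case/findl_some: E => hL _ hLn.
    have hLl : load s L < alpha by case/andP: hL.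
    apply: (inv_place (m := mat s) (nx := nxt s) (f := fb s)) => //.
    * by move=> c hc; case: (i_fresh iv hc).
    * alra.
    * move=> c hc; have := i_mat iv hc.
      by case: (c == L); alra.
    * move=> c1 c2; rewrite !light_addi //.
      have hc c : (if c == L then load s L + x < alpha else light s c) -> c = L.
        case: (eqVneq c L) => // hcL hc; exact: (i_light iv hc hL).
      by move=> /hc -> /hc ->.
    * by move=> c _ -> ->.
    * move=> hm hf; exfalso; move/negP: hf; apply; apply/eqP.
      exact: (light_fb iv hL hm).
  + have nolight c : light s c = false.
      apply/negbTE/negP => hc.
      by have := findl_none E (light_lt iv hc); rewrite hc.
    case: ifP => hfb.
    * case/andP: hfb => hfne hfl.
      apply: (inv_place (m := mat s) (nx := nxt s) (f := fb s)) => //.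
      - exact: (nonempty_lt iv hfne).
      - by move=> c hc; case: (i_fresh iv hc).
      - move=> c hc; have := i_mat iv hc.
        by case: (c == fb s); alra.
      - move=> c1 c2; rewrite !light_addi // !nolight.
        by case: (eqVneq c1 (fb s)) => // ->; case: (eqVneq c2 (fb s)) => // ->.
      - by move=> c _ -> ->.
      - by rewrite eqxx.
    * apply: inv_place => //.
      - move=> c hc; have hc' : (nxt s <= c)%N by apply: ltnW.
        case: ifP => hf; last by case: (i_fresh iv hc').
        rewrite /upd; case: eqP => [e|_]; last by case: (i_fresh iv hc').
        by move: (nonempty_lt iv hf); rewrite -e ltnNge hc'.
      - by rewrite load_nxt add0r.
      - move=> c; case: ifP => hf.
          rewrite /upd; case: (eqVneq c (fb s)) => [->|hne] hc.
            have := i_dpb iv (fb s); rewrite (ltn_eqF (nonempty_lt iv hf)).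
            move: hfb; rewrite hf /= => /negbT; rewrite -ltNge => hl.
            alra.
          rewrite (ltn_eqF (matlt _ hc)) addr0; exact: (i_mat iv).
        move=> hc; rewrite (ltn_eqF (matlt _ hc)) addr0; exact: (i_mat iv).
      - move=> c1 c2; rewrite !light_addi // !nolight.
        by case: (eqVneq c1 (nxt s)) => // ->; case: (eqVneq c2 (nxt s)) => // ->.
      - move=> c hc; case: ifP => hf.
          rewrite /upd; case: (eqVneq c (fb s)) => [-> //|hne] hm _.
          by rewrite hm.
        move=> hm _; rewrite hm /=; apply/eqP => e; move: hf; rewrite -e hc.
        done.
      - by rewrite eqxx.
Qed.

Record INVW (s : st) : Prop := InvW {
 w_sz : forall i, pr s i -> 0 <= szs s i <= 1;
 w_asg : forall i, pr s i -> (asg s i < nxt s)%N;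
 w_fresh : forall b, (nxt s <= b)%N -> mat s b = false /\ dpb s b = 0;
 w_dpb : forall b, 0 <= dpb s b;
 w_load : forall b, load s b <= 1;
 w_big : forall b, nonempty s b -> ~~ mat s b -> b != fb s ->
           forall i, pr s i -> asg s i = b -> alpha < szs s i;
 w_mat : forall b, mat s b -> 1 - alpha <= dpb s b + load s b;
 w_dp : forall i, dp s i -> (i < na s)%N }.

Lemma INV_W s : INV s -> INVW s.
Proof. by case. Qed.

Lemma W_INV s : INVW s -> (forall b1 b2, light s b1 -> light s b2 -> b1 = b2) -> INV s.
Proof. by case. Qed.

Lemma light_fbW s b : INVW s -> light s b -> ~~ mat s b -> b = fb s.
Proof.
move=> iv /andP[hne hl] hm; apply/eqP/negPn/negP => hb.
have h0 : forall i, pr s i -> 0 <= szs s i by move=> i /(w_sz iv) /andP[].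
have := load_big h0 hne (w_big iv hne hm hb).
by rewrite ltNge (ltW hl).
Qed.

Lemma inv_merge s Y Z : INVW s -> Y != Z -> light s Y -> light s Z -> mat s Y ->
  (forall c, light s c -> c = Y \/ c = Z) -> INV (merge s Y Z).
Proof.
move=> iv hYZ hlY hlZ hmY hl.
have h0 : forall i, pr s i -> 0 <= szs s i by move=> i /(w_sz iv) /andP[].
have hZn : (Z < nxt s)%N by case/andP: hlZ => /nonemptyP[i [hp <-]] _; apply: (w_asg iv).
have ldE := load_merge s hYZ.
have neE := nonempty_merge s hYZ.
have lY : load s Y < alpha by case/andP: hlY.
have lZ : load s Z < alpha by case/andP: hlZ.
have lightE c : c != Y -> c != Z -> light (merge s Y Z) c = light s c.
  by move=> h1 h2; rewrite /light ldE neE (negbTE h1) (negbTE h2).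
split.
- exact: (w_sz iv).
- by move=> i hp /=; case: ifP => _ //; apply: (w_asg iv).
- move=> b hb /=; rewrite /upd; case: ifP => _ //; exact: (w_fresh iv).
- by move=> b /=; rewrite /upd; case: ifP => _ //; apply: (w_dpb iv).
- move=> b; rewrite ldE; case: ifP => _; first by alra.
  case: ifP => _; first by alra.
  exact: (w_load iv).
- have hc c : light (merge s Y Z) c -> c = Z.
    case: (eqVneq c Y) => [->|h1]; first by rewrite /light neE eqxx.
    case: (eqVneq c Z) => [->//|h2].
    by rewrite lightE // => /hl [] e; [move: h1|move: h2]; rewrite e eqxx.
  by move=> c1 c2 /hc -> /hc ->.
- move=> b; rewrite neE; case: (eqVneq b Y) => [//|hbY].
  case: (eqVneq b Z) => [->|hbZ].
    move=> _ /=; rewrite /upd ifN_eq; last by rewrite eq_sym.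
    move=> hm hf.
    by move: hf; rewrite (light_fbW iv hlZ hm) eqxx.
  move=> hne /=; rewrite /upd (negbTE hbY) => hm hf i hp.
  case: ifP => [_ e|_ e]; first by move: hbZ; rewrite -e eqxx.
  exact: (w_big iv hne hm hf hp e).
- move=> b /=; rewrite /upd; case: ifP => // hbY hm.
  have := w_mat iv hm; rewrite ldE hbY; case: ifP => [/eqP ->|_]; last by [].
  have := load_ge0 Y h0; alra.
- exact: (w_dp iv).
Qed.

Variable cc : R.
Hypothesis hcc : 0 <= cc.
Hypothesis hcc2 : forall l, 0 <= l -> l < alpha -> l <= cc * (1 - alpha - l).

Definition sdpb (s : st) := \sum_(0 <= b < nxt s) dpb s b.
Definition cost (s s' : st) :=
  \sum_(0 <= i < na s | pr s i && pr s' i && (asg s i != asg s' i)) szs s i.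

Lemma sum_upd (f : nat -> R) m b v : (b < m)%N ->
  \sum_(0 <= x < m) upd f b v x = \sum_(0 <= x < m) f x - f b + v.
Proof.
move=> hb.
have hm : b \in index_iota 0 m by rewrite mem_index_iota.
rewrite (@sum_split1 _ predT _ b) ?iota_uniq // [in RHS](@sum_split1 _ predT _ b) ?iota_uniq //=.
rewrite /upd eqxx.
have -> : \sum_(i <- index_iota 0 m | true && (i != b)) (if i == b then v else f i) =
          \sum_(i <- index_iota 0 m | true && (i != b)) f i.
  by apply: eq_bigr => i /negbTE ->.
lra.
Qed.

Lemma depart_fields s j :
  [/\ na (depart s j) = na s, dp (depart s j) = upd (dp s) j true,
      szs (depart s j) = szs s & nxt (depart s j) = nxt s].
Proof.
rewrite /depart; case: ifP => _; last by [].
case: findl => [X|] //; by case: ifP.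
Qed.

Lemma depart_inv s j : INV s -> pr s j ->
  INV (depart s j) /\
  cost s (depart s j) + cc * sdpb (depart s j) <= cc * sdpb s + cc * szs s j.
Proof.
move=> iv hj.
have hBn : (asg s j < nxt s)%N := i_asg iv hj.
have h0 := szs0 iv.
have /andP[hsj0 hsj1] := i_sz iv hj.
have ld1 := load_del hj.
have pr1 := pr_del s j.
have w1 : INVW (del s j).
  split.
  - by move=> i; rewrite pr1 => /andP[hp _]; apply: (i_sz iv).
  - by move=> i; rewrite pr1 => /andP[hp _]; apply: (i_asg iv).
  - move=> b hb /=; rewrite /upd; case: eqP => [e|_]; last exact: (i_fresh iv).
    by move: hBn; rewrite -e ltnNge hb.
  - move=> b /=; rewrite /upd; case: ifP => _; last exact: (i_dpb iv).
    by have := i_dpb iv (asg s j); alra.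
  - move=> b; rewrite ld1; have := i_load iv b; case: ifP => _; alra.
  - move=> b /nonempty_del hne hm hf i; rewrite pr1 => /andP[hp _].
    exact: (i_big iv hne hm hf hp).
  - move=> b /= hm; have := i_mat iv hm; rewrite ld1 /upd; case: ifP => [/eqP ->|_]; alra.
  - move=> i /=; rewrite /upd; case: eqP => [->|_]; first by case/andP: hj.
    exact: (i_dp iv).
have li1 c : c != asg s j -> light (del s j) c = light s c.
  by move=> hc; rewrite /light nonempty_del_ne // ld1 (negbTE hc) subr0.
have cost0 : cost s (del s j) = 0.
  by rewrite /cost big1 // => i; rewrite eqxx andbF.
have sd1 : sdpb (del s j) = sdpb s + szs s j.
  by rewrite /sdpb /= sum_upd //; lra.
have pot0 : cost s (del s j) + cc * sdpb (del s j) <= cc * sdpb s + cc * szs s j.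
  by rewrite cost0 sd1 add0r mulrDr.
rewrite /depart; case: ifP => hlB; last first.
  split => //; apply: (W_INV w1) => c1 c2.
  have hc c : light (del s j) c -> light s c.
    case: (eqVneq c (asg s j)) => [->|hc]; first by rewrite hlB.
    by rewrite li1.
  by move=> /hc h1 /hc h2; apply: (i_light iv).
case E: findl => [X|]; last first.
  split => //; apply: (W_INV w1) => c1 c2.
  have hc c : light (del s j) c -> c = asg s j.
    move=> h; apply/eqP/negPn/negP => hne.
    have hlt : (c < nxt (del s j))%N.
      by case/andP: h => /nonemptyP[i [hp <-]] _; apply: (w_asg w1).
    by have := findl_none E hlt; rewrite h hne.
  by move=> /hc -> /hc ->.
case/findl_some: E => hlX hXB hXn.
have hlXs : light s X by rewrite -li1 // eq_sym.
have two c : light (del s j) c -> c = asg s j \/ c = X.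
  case: (eqVneq c (asg s j)) => [->|hc]; first by left.
  by rewrite li1 // => h; right; apply: (i_light iv h hlXs).
have pot Y Z : Y != Z -> light (del s j) Y -> mat (del s j) Y ->
    cost s (merge (del s j) Y Z) + cc * sdpb (merge (del s j) Y Z) <=
    cc * sdpb s + cc * szs s j.
  move=> hYZ hlY hmY.
  have hYn : (Y < nxt s)%N by case/andP: hlY => /nonemptyP[i [hp <-]] _; apply: (w_asg w1).
  have -> : cost s (merge (del s j) Y Z) = load (del s j) Y.
    rewrite /cost /load /=; apply: eq_bigl => i.
    rewrite (_ : pr (merge (del s j) Y Z) i = pr (del s j) i) // pr1.
    case: (pr s i) => //=; case: (i != j) => //=.
    case: (eqVneq (asg s i) Y) => [->|hn] /=; first by rewrite hYZ.
    by rewrite eqxx.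
  have -> : sdpb (merge (del s j) Y Z) = sdpb (del s j) - dpb (del s j) Y.
    by rewrite /sdpb /= sum_upd //; lra.
  rewrite sd1.
  have hm := w_mat w1 hmY.
  have hl : load (del s j) Y < alpha by case/andP: hlY.
  have hl0 : 0 <= load (del s j) Y by apply: load_ge0 => i /(w_sz w1) /andP[].
  have := hcc2 hl0 hl.
  have : cc * (1 - alpha - load (del s j) Y) <= cc * dpb (del s j) Y.
    by apply: ler_wpM2l => //; lra.
  move=> h1 h2; rewrite mulrBr mulrDr; lra.
case: ifP => hmB.
  have hBX : asg s j != X by rewrite eq_sym.
  split; last exact: (pot _ _ hBX hlB hmB).
  by apply: inv_merge.
have hmX : mat (del s j) X.
  apply/negPn/negP => hmX.
  have e1 := light_fbW w1 hlX hmX.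
  have e2 := light_fbW w1 hlB (negbT hmB).
  by move: hXB; rewrite e1 e2 eqxx.
split; last exact: (pot _ _ hXB hlX hmX).
apply: inv_merge => // c /two [] ->; by [right|left].
Qed.

Lemma arrive_fields s (x : R) :
  [/\ na (arrive s x) = (na s).+1, dp (arrive s x) = dp s,
      szs (arrive s x) = upd (szs s) (na s) x, dpb (arrive s x) = dpb s &
      (nxt (arrive s x) = nxt s \/ nxt (arrive s x) = (nxt s).+1)].
Proof.
rewrite /arrive; case: ifP => _; first by split => //; right.
case: findl => [L|]; first by split => //; left.
by case: ifP => _; split => //; [left|right].
Qed.

Lemma arrive_asg s (x : R) i : pr s i -> asg (arrive s x) i = asg s i.
Proof.
move=> hp; rewrite /arrive; case: ifP => _; first exact: asg_addi.
case: findl => [L|]; first exact: asg_addi.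
by case: ifP => _; exact: asg_addi.
Qed.

Lemma arrive_pot s (x : R) : INV s ->
  cost s (arrive s x) + cc * sdpb (arrive s x) <= cc * sdpb s.
Proof.
move=> iv; have [_ _ _ hd hn] := arrive_fields s x.
have -> : cost s (arrive s x) = 0.
  by rewrite /cost big1 // => i /andP[/andP[hp _]]; rewrite arrive_asg // eqxx.
have -> : sdpb (arrive s x) = sdpb s.
  rewrite /sdpb hd; case: hn => ->; first by [].
  by rewrite big_nat_recr //= (proj2 (i_fresh iv (leqnn _))) addr0.
by rewrite add0r.
Qed.

Definition init := St (fun _ => 0%N) 0 (fun _ => false) (fun _ => 0) (fun _ => false) 0 0 (fun _ => 0).

Lemma inv_init : INV init.
Proof.
have ld b : load init b = 0 by rewrite /load big_geq.
split => //=.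
- by move=> b; rewrite ld ler01.
Qed.

Definition step (s : st) (e : event) : st :=
  match e with Arrive _ x => arrive s x | Depart _ j => depart s j end.

Definition run (h : seq event) := foldl step init h.

End Alg.

Definition alg (alpha : R) : online_alg := fun h => asg (run alpha h).

Lemma partition_sum (r rb : seq nat) (P : pred nat) (f : nat -> nat) (F : nat -> R) :
  uniq rb -> (forall i, i \in r -> P i -> f i \in rb) ->
  \sum_(i <- r | P i) F i = \sum_(b <- rb) \sum_(i <- r | P i && (f i == b)) F i.
Proof.
move=> urb hf.
have -> : \sum_(b <- rb) \sum_(i <- r | P i && (f i == b)) F i =
          \sum_(b <- rb) \sum_(i <- r) (if P i && (f i == b) then F i else 0).
  by apply: eq_bigr => b _; rewrite big_mkcond.
rewrite exchange_big big_mkcond /=; apply: eq_big_seq => i hi.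
case Pi: (P i) => /=; last by rewrite big1.
rewrite -big_mkcond (@sum_split1 rb (fun b => f i == b) (fun _ => F i) (f i)) ?eqxx //; last exact: hf.
by rewrite big1 ?addr0 // => b /andP[/eqP e]; rewrite e eqxx.
Qed.

Lemma sum_all_ge (U : seq nat) (L : nat -> R) (a : R) :
  (forall b, b \in U -> a <= L b) -> a * (size U)%:R <= \sum_(b <- U) L b.
Proof.
elim: U => [|x U IH] h; first by rewrite big_nil mulr0.
rewrite big_cons /= -nat1r mulrDr mulr1.
have h1 := h x (mem_head _ _).
have h2 : a * (size U)%:R <= \sum_(b <- U) L b.
  by apply: IH => b hb; apply: h; rewrite in_cons hb orbT.
lra.
Qed.

Lemma sum_lb (U : seq nat) (L : nat -> R) (a : R) : 0 <= a ->
  uniq U -> (forall b, b \in U -> 0 <= L b) ->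
  (forall b1 b2, b1 \in U -> b2 \in U -> L b1 < a -> L b2 < a -> b1 = b2) ->
  a * ((size U)%:R - 1) <= \sum_(b <- U) L b.
Proof.
move=> ha; elim: U => [|x U IH] /= hu h0 hl; first by rewrite big_nil mulr0n sub0r mulrN1 oppr_le0.
case/andP: hu => hx hu.
rewrite big_cons -nat1r [1 + _]addrC addrK.
have h0x := h0 x (mem_head _ _).
case: (ltP (L x) a) => hLx.
  have : a * (size U)%:R <= \sum_(b <- U) L b.
    apply: sum_all_ge => b hb; rewrite leNgt; apply/negP => hLb.
    have hbU : b \in x :: U by rewrite in_cons hb orbT.
    have e := hl b x hbU (mem_head _ _) hLb hLx.
    by move: hx; rewrite -e hb.
  lra.
have : a * ((size U)%:R - 1) <= \sum_(b <- U) L b.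
  apply: IH => //; first by move=> b hb; apply: h0; rewrite in_cons hb orbT.
  by move=> b1 b2 h1 h2; apply: hl; rewrite in_cons ?h1 ?h2 orbT.
rewrite mulrBr mulr1; lra.
Qed.

Lemma sum_na (s : st) n (P : pred nat) (F G : nat -> R) :
  (na s <= n)%N -> (forall i, (i < na s)%N -> F i = G i) -> (forall i, P i -> (i < na s)%N) ->
  \sum_(0 <= i < na s | P i) F i = \sum_(0 <= i < n | P i) G i.
Proof.
move=> hle hFG hP; rewrite (big_nat_widen _ _ _ _ _ hle).
apply: eq_big => [i|i /andP[_ hi]]; last exact: hFG.
by case: (boolP (P i)) => //= /hP ->.
Qed.

Section Run.
Variables (alpha cc : R).
Hypothesis ha0 : 0 < alpha.
Hypothesis ha1 : alpha + alpha < 1.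
Hypothesis hcc : 0 <= cc.
Hypothesis hcc2 : forall l, 0 <= l -> l < alpha -> l <= cc * (1 - alpha - l).
Variable I : seq item.
Hypothesis vI : valid_instance I.
Local Notation n := (size I).
Local Notation ev := (events I).
Local Notation x0 := ((0 : R), 0%N, 0%N).

Definition sk k := run alpha (map (observe I) (take k ev)).

Definition Corr k (s : st) :=
  [/\ na s = count isArr (take k ev),
      (forall i, dp s i = (dep_ev I i \in take k ev)) &
      (forall i, (i < na s)%N -> szs s i = sz (it_ I i))].

Lemma pr_corr k s : Corr k s -> forall i, pr s i = present_after I k i.
Proof.
case=> hna hdp _ i; rewrite /pr /present_after hna hdp.
case: (ltnP i n) => hi; first by rewrite arr_take.
have -> : (i < count isArr (take k ev))%N = false.
  by apply/negbTE; rewrite -leqNgt; apply: leq_trans hi; apply: count_arr_le.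
have -> : (arr_ev I i \in take k ev) = false.
  apply/negbTE/negP => /mem_take /arr_idx; rewrite ltnNge hi.
  done.
done.
Qed.

Lemma sk_step k : (k < size ev)%N ->
  sk k.+1 = step alpha (sk k) (observe I (nth x0 ev k)).
Proof. by move=> hk; rewrite /sk (take_nth x0) // map_rcons /run foldl_rcons. Qed.

Definition costT k := \sum_(0 <= i < size I | [&& present_after I k i, present_after I k.+1 i
                              & config (alg alpha) I k i != config (alg alpha) I k.+1 i])
       sz (it_ I i).
Definition Dk k := \sum_(0 <= i < n | dep_ev I i \in take k ev) sz (it_ I i).

Lemma costT_eq k : Corr k (sk k) -> Corr k.+1 (sk k.+1) -> costT k = cost (sk k) (sk k.+1).
Proof.
move=> c1 c2; rewrite /cost.
have hle : (na (sk k) <= n)%N by case: c1 => -> _ _; apply: count_arr_le.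
rewrite (@sum_na _ n _ _ (fun i => sz (it_ I i))) //; last first.
- by move=> i /andP[/andP[/andP[]]].
- by case: c1 => _ _ h.
rewrite /costT; apply: eq_bigl => i.
by rewrite (pr_corr c1) (pr_corr c2) andbA.
Qed.

Lemma main k : (k <= size ev)%N ->
  [/\ Corr k (sk k), INV alpha (sk k) &
      \sum_(0 <= k' < k) costT k' + cc * sdpb (sk k) <= cc * Dk k].
Proof.
elim: k => [_|k IH hk].
  split.
  - by rewrite /sk /Corr !take0.
  - rewrite /sk take0; exact: inv_init.
  - rewrite big_geq // add0r /sk take0 /sdpb /= big_geq // mulr0 /Dk big1 ?mulr0 //.
    by move=> i; rewrite take0.
have [c1 iv pot] := IH (ltnW hk).
have hmem : nth x0 ev k \in ev by apply: mem_nth.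
have hnot : nth x0 ev k \notin take k ev by apply: nth_notin_take => //; exact: uniq_ev.
have htk : take k.+1 ev = rcons (take k ev) (nth x0 ev k) by apply: take_nth.
have hcnt : count isArr (take k.+1 ev) = (count isArr (take k ev) + isArr (nth x0 ev k))%N.
  by rewrite htk -cats1 count_cat /= addn0.
have c2 : [/\ Corr k.+1 (sk k.+1), INV alpha (sk k.+1) &
          cost (sk k) (sk k.+1) + cc * sdpb (sk k.+1) <= cc * sdpb (sk k) + cc * (Dk k.+1 - Dk k)].
  rewrite (sk_step hk).
  case: (ev_cases hmem) => [][j hj ej].
  -
    have hobs : observe I (nth x0 ev k) = Depart (ev_time (nth x0 ev k)) j.
      by rewrite /observe ej.
    rewrite hobs /=.
    have hpj : pr (sk k) j.
      rewrite (pr_corr c1) /present_after -ej hnot andbT.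
      have := @dep_before_arr I vI j k.+1; rewrite htk mem_rcons in_cons ej eqxx /= => /(_ isT).
      rewrite mem_rcons in_cons; case/orP => // /eqP [] _ /eqP.
      done.
    have [iv2 pot2] := depart_inv ha0 ha1 hcc hcc2 iv hpj.
    have [f1 f2 f3 f4] := depart_fields alpha (sk k) j.
    case: c1 => hna hdp hsz.
    split => //.
    + split.
      * by rewrite f1 hcnt ej /isArr /= addn0.
      * move=> i; rewrite f2 /upd htk mem_rcons in_cons ej (inj_eq (@dep_ev_inj I)).
        by case: eqP => [->|_] //=; rewrite hdp.
      * by move=> i; rewrite f1 f3; apply: hsz.
    + have -> : Dk k.+1 - Dk k = szs (sk k) j.
        rewrite hsz; last by case/andP: hpj.
        rewrite /Dk (@sum_split1 _ _ _ j) ?iota_uniq ?mem_index_iota //.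
        rewrite [X in _ - X](@sum_split1 _ _ _ j) ?iota_uniq ?mem_index_iota //.
        rewrite htk mem_rcons in_cons ej eqxx /=.
        have -> : (dep_ev I j \in take k ev) = false by apply/negbTE; rewrite -ej.
        rewrite add0r.
        have -> : \sum_(i <- index_iota 0 n | (dep_ev I i \in rcons (take k ev) (dep_ev I j)) && (i != j))
                    sz (it_ I i) =
                  \sum_(i <- index_iota 0 n | (dep_ev I i \in take k ev) && (i != j)) sz (it_ I i).
          apply: eq_bigl => i; rewrite mem_rcons in_cons (inj_eq (@dep_ev_inj I)).
          by case: (i == j); rewrite ?andbF.
        by rewrite addrK.
      exact: pot2.
  -
    have hobs : observe I (nth x0 ev k) = Arrive (ev_time (nth x0 ev k)) (sz (it_ I j)).
      by rewrite /observe ej.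
    rewrite hobs /=.
    case: c1 => hna hdp hsz.
    have hjna : j = na (sk k).
      have h1 : arr_ev I j \in take k.+1 ev by rewrite htk mem_rcons in_cons ej eqxx.
      have h2 : arr_ev I j \notin take k ev by rewrite -ej.
      move: h1 h2; rewrite !arr_take // hcnt ej /isArr /= -hna; lia.
    have [f1 f2 f3 f4 f5] := arrive_fields alpha (sk k) (sz (it_ I j)).
    split.
    + split.
      * by rewrite f1 hcnt ej /isArr /= hna addn1.
      * move=> i; rewrite f2 htk mem_rcons in_cons ej hdp.
        have -> : (dep_ev I i == arr_ev I j) = false by apply/negbTE/eqP => -[].
        done.
      * move=> i; rewrite f1 f3 /upd ltnS leq_eqVlt; case: eqP => [->|_] /=.
          by rewrite -hjna.
        exact: hsz.
    + apply: (inv_arrive ha0 ha1 iv).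
      by case: vI => /(_ j hj) [_ [h _]].
    + have -> : Dk k.+1 - Dk k = 0.
        rewrite /Dk htk; apply/eqP; rewrite subr_eq0; apply/eqP; apply: eq_bigl => i.
        rewrite mem_rcons in_cons ej.
        have -> : (dep_ev I i == arr_ev I j) = false by apply/negbTE/eqP => -[].
        done.
      by rewrite mulr0 addr0; apply: arrive_pot.
case: c2 => c2 iv2 pot2.
split => //.
rewrite big_nat_recr //= (costT_eq c1 c2).
move: pot pot2; rewrite mulrBr; lra.
Qed.



Lemma load_n k : Corr k (sk k) -> forall b,
  load (sk k) b = \sum_(0 <= i < n | pr (sk k) i && (asg (sk k) i == b)) sz (it_ I i).
Proof.
move=> c b; rewrite /load (@sum_na _ n _ _ (fun i => sz (it_ I i))) //.
- by case: c => -> _ _; apply: count_arr_le.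
- by case: c => _ _ h.
- by move=> i /andP[/andP[]].
Qed.

Lemma sz_ge0 i : (i < n)%N -> 0 <= sz (it_ I i).
Proof. by case: vI => /(_ i) h _ /h [_ [/andP[]]]. Qed.

Lemma feasible_alg : feasible (alg alpha) I.
Proof.
move=> k hk b; have [c iv _] := main hk.
have := i_load iv b; rewrite (load_n c).
by under eq_bigl => i do rewrite (pr_corr c).
Qed.

Lemma migr_alg : migrated_size (alg alpha) I <= cc * total_size I.
Proof.
have [c iv pot] := main (leqnn (size ev)).
have e : migrated_size (alg alpha) I = \sum_(0 <= k' < size ev) costT k' by [].
have h1 : 0 <= sdpb (sk (size ev)).
  by apply: sumr_ge0 => b _; apply: (i_dpb iv).
have h2 : Dk (size ev) <= total_size I.
  rewrite /Dk /total_size [X in _ <= X]big_mkcond [X in X <= _]big_mkcond /=.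
  rewrite [X in _ <= X]big_seq [X in X <= _]big_seq.
  apply: ler_sum => i; rewrite mem_index_iota => /andP[_ hi].
  by case: ifP => _ //; apply: sz_ge0.
have h3 : 0 <= cc * sdpb (sk (size ev)) by apply: mulr_ge0.
have h4 : cc * Dk (size ev) <= cc * total_size I by apply: ler_wpM2l.
rewrite e; lra.
Qed.

Lemma present_time t i : (i < n)%N ->
  present_at I t i = present_after I (count (fun e => ev_time e <= t) ev) i.
Proof.
move=> hi; rewrite /present_after time_prefix // !mem_filter arr_in // dep_in //.
rewrite /present_at /ev_time /= !andbT ltNge.
done.
Qed.

Lemma packable_le P m : packable I P m -> \sum_(0 <= i < n | P i) sz (it_ I i) <= m%:R.
Proof.
case=> f [hf hb].
rewrite (@partition_sum _ (index_iota 0 m) P f) ?iota_uniq //; last first.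
  by move=> i; rewrite mem_index_iota => /andP[_ hi] /(hf i hi); rewrite mem_index_iota.
apply: le_trans (_ : \sum_(0 <= b < m) (1 : R) <= _).
  by apply: ler_sum => b _; apply: hb.
by rewrite sumr_const_nat subn0.
Qed.

Lemma bins_alg t m : packable I (present_at I t) m ->
  (open_bins (alg alpha) I t)%:R <= m%:R / alpha + 1.
Proof.
move=> hp.
set K := count (fun e => ev_time e <= t) ev.
have hK : (K <= size ev)%N by apply: count_size.
have [c iv _] := main hK.
set s := sk K.
set r := [seq i <- iota 0 n | pr s i].
set U := undup [seq asg s i | i <- r].
have e1 : open_bins (alg alpha) I t = size U.
  rewrite /open_bins /U /r; congr (size (undup (map _ _))).
  apply: eq_in_filter => i; rewrite mem_iota add0n => /andP[_ hi].
  by rewrite (pr_corr c) present_time.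
have hS : \sum_(0 <= i < n | pr s i) sz (it_ I i) <= m%:R.
  have -> : \sum_(0 <= i < n | pr s i) sz (it_ I i) =
            \sum_(0 <= i < n | present_at I t i) sz (it_ I i).
    rewrite big_mkcond [RHS]big_mkcond; apply: eq_big_nat => i /andP[_ hi].
    by rewrite (pr_corr c) present_time.
  exact: packable_le hp.
have Lb b : b \in U -> nonempty s b /\
    \sum_(i <- r | true && (asg s i == b)) sz (it_ I i) = load s b.
  move=> hb; split.
    move: hb; rewrite mem_undup => /mapP[i hi ->]; apply/nonemptyP; exists i; split => //.
    by move: hi; rewrite mem_filter => /andP[].
  rewrite (load_n c) big_filter_cond /index_iota subn0.
  by apply: eq_bigl => i.
have hB : alpha * ((size U)%:R - 1) <= \sum_(0 <= i < n | pr s i) sz (it_ I i).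
  have -> : \sum_(0 <= i < n | pr s i) sz (it_ I i) = \sum_(i <- r) sz (it_ I i).
    by rewrite big_filter /index_iota subn0.
  have hpart := @partition_sum r U (fun _ => true) (asg s) (fun i => sz (it_ I i)) (undup_uniq _).
  rewrite /= in hpart; rewrite hpart; last first.
    by move=> i hi _; rewrite mem_undup; apply: map_f.
  apply: sum_lb; [exact: ltW|exact: undup_uniq| |].
    move=> b _; rewrite big_seq_cond; apply: sumr_ge0 => i /andP[hi _].
    by move: hi; rewrite mem_filter mem_iota add0n => /andP[_ /andP[_ hi]]; apply: sz_ge0.
  move=> b1 b2 h1 h2 l1 l2; apply: (i_light iv).
    by case: (Lb b1 h1) => hn hl; apply/andP; split; rewrite -?hl.
  by case: (Lb b2 h2) => hn hl; apply/andP; split; rewrite -?hl.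
rewrite e1.
have : (size U)%:R - 1 <= m%:R / alpha.
  by rewrite ler_pdivlMr // mulrC; lra.
lra.
Qed.
End Run.

Theorem theorem22 (alpha : R) (halpha : 0 < alpha < 1 / 2) :
  exists A : online_alg,
    forall I : seq item, valid_instance I ->
      feasible A I /\
      migrated_size A I <= alpha / (1 - 2 * alpha) * total_size I /\
      (forall (t : R) (m : nat), packable I (present_at I t) m ->
         (open_bins A I t)%:R <= m%:R / alpha + 1).
Proof.
case/andP: halpha => ha0 ha1'.
have ha1 : alpha + alpha < 1.
  by move: ha1'; rewrite ltr_pdivlMr ?ltr0n // => h; lra.
have hd : 0 < 1 - 2 * alpha by lra.
have hcc : 0 <= alpha / (1 - 2 * alpha) by apply: divr_ge0; lra.
have hcc2 : forall l, 0 <= l -> l < alpha -> l <= alpha / (1 - 2 * alpha) * (1 - alpha - l).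
  move=> l hl0 hl; rewrite mulrAC ler_pdivlMr //.
  have : 0 <= (alpha - l) * (1 - alpha) by apply: mulr_ge0; lra.
  nra.
exists (alg alpha) => I vI; split; last split.
- exact: (feasible_alg ha0 ha1 hcc hcc2 vI).
- exact: (migr_alg ha0 ha1 hcc hcc2 vI).
- move=> t m; exact: (bins_alg ha0 ha1 hcc hcc2 vI).
Qed.
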